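(* Let $G$ be a median graph, let $p,q$ be vertices of $G$, and let $k$ be the largest dimension of a cube subgraph of the subgraph $G(I(p,q))$ induced by $I(p,q)$. Then (i) for every vertex $v\in I(p,q)$ and any $m$ distinct neighbors $y_1,\dots,y_m$ of $v$ lying in $I(v,q)$, there is an $m$-dimensional cube subgraph of $G$ contained in $I(v,q)$ and containing $v,y_1,\dots,y_m$; and (ii) $G(I(p,q))$ admits an isometric embedding into the $k$-dimensional grid $\mathbb Z^k=\prod_{i=1}^k P_i$ (Cartesian product of $k$ two-way infinite paths, with its graph metric).
   Context: A median graph is a connected graph in which for every three vertices $u,v,w$ the set $I(u,v)\cap I(v,w)\cap I(w,u)$ consists of a single vertex, where $I(a,b)=\{z:d_G(a,z)+d_G(z,b)=d_G(a,b)\}$ and $d_G$ is the graph distance. $G(S)$ denotes the subgraph induced by a vertex set $S$. An $m$-dimensional cube subgraph is a subgraph isomorphic to the hypercube graph $Q_m$. An isometric embedding of graphs is a map $f$ with $d(f(a),f(b))=d_G(a,b)$ for all vertices $a,b$. *)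

(* Defs.v *)
From HB Require Import structures.
From mathcomp Require Import all_boot all_order all_algebra.
Set Implicit Arguments. Unset Strict Implicit. Unset Printing Implicit Defensive.
Import Order.TTheory GRing.Theory Num.Theory.

Inductive gwalk (T : Type) (e : T -> T -> Prop) : T -> T -> nat -> Prop :=
| walk0 a : gwalk e a a 0
| walkS a b c n : e a b -> gwalk e b c n -> gwalk e a c n.+1.

Definition gdist (T : Type) (e : T -> T -> Prop) (a b : T) (n : nat) : Prop :=
  gwalk e a b n /\ forall m, gwalk e a b m -> n <= m.

Definition connected (T : Type) (e : T -> T -> Prop) : Prop :=
  forall a b, exists n, gwalk e a b n.

Definition simple_graph (T : Type) (e : T -> T -> Prop) : Prop :=
  (forall a b, e a b -> e b a) /\ (forall a, ~ e a a).

Definition ginterval (T : Type) (e : T -> T -> Prop) (a b z : T) : Prop :=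
  exists n1 n2, gdist e a z n1 /\ gdist e z b n2 /\ gdist e a b (n1 + n2).

Definition median_graph (T : Type) (e : T -> T -> Prop) : Prop :=
  [/\ simple_graph e, connected e &
      forall u v w, exists! x,
        ginterval e u v x /\ ginterval e v w x /\ ginterval e w u x].

Definition qadj (m : nat) (x y : {ffun 'I_m -> bool}) : Prop :=
  #|[set i | x i != y i]| = 1%N.

(* f is (the vertex map of) an m-dimensional cube subgraph of G whose
   vertices all lie in S: an injective, edge-preserving map Q_m -> G *)
Definition cube_in (T : Type) (e : T -> T -> Prop) (S : T -> Prop) (m : nat)
  (f : {ffun 'I_m -> bool} -> T) : Prop :=
  [/\ injective f, (forall x y, qadj x y -> e (f x) (f y)) & forall x, S (f x)].

Definition ginduced (T : Type) (e : T -> T -> Prop) (S : T -> Prop)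
  (a b : {z : T | S z}) : Prop := e (proj1_sig a) (proj1_sig b).

Definition grid_adj (k : nat) (x y : 'I_k -> int) : Prop :=
  exists i : 'I_k, `|x i - y i|%R = 1%R /\ forall j, j != i -> x j = y j.

(* Main.v *)
Require Import Defs.
From HB Require Import structures.
From mathcomp Require Import all_boot all_order all_algebra.
From Stdlib Require Import Lia ClassicalEpsilon FunctionalExtensionality ProofIrrelevance.
Set Implicit Arguments. Unset Strict Implicit. Unset Printing Implicit Defensive.

Ltac nlia := repeat match goal with
 | H : is_true (~~ (_ <= _)) |- _ => rewrite -ltnNge in H
 | |- is_true (~~ (_ <= _)) => rewrite -ltnNge
 | H : is_true (_ <= _) |- _ => move/leP: H => H
 | H : (_ <= _) = true |- _ => move/leP: H => H
 | H : (_ <= _) = false |- _ => move/negbT: H => H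
 | |- is_true (_ <= _) => apply/leP
 | |- (_ <= _) = true => apply/leP
 | |- (_ <= _) = false => apply/negbTE; rewrite -ltnNge
 | H : is_true (_ == _) |- _ => move/eqP: H => H
 | |- is_true (_ == _) => apply/eqP
 | H : is_true (~~ (_ == _)) |- _ => move/eqP: H => H
 end; unfold addn, subn, muln in *; lia.

Definition asb (P : Prop) : bool :=
  if excluded_middle_informative P then true else false.
Lemma asbP (P : Prop) : reflect P (asb P).
Proof. rewrite /asb; case: excluded_middle_informative => H; by constructor. Qed.

Section Walks.
Variables (T : Type) (e : T -> T -> Prop).

Lemma walk_cat a b c n m : gwalk e a b n -> gwalk e b c m -> gwalk e a c (n + m).
Proof.
elim=> [x|x y z k Hxy _ IH] H //=.
rewrite addSn; apply: walkS Hxy (IH H).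
Qed.

Lemma walk_snoc a b c n : gwalk e a b n -> e b c -> gwalk e a c n.+1.
Proof.
move=> H Hbc; have := walk_cat H (walkS Hbc (walk0 e c)); by rewrite addn1.
Qed.

Lemma walk_rev a b n : (forall x y, e x y -> e y x) -> gwalk e a b n -> gwalk e b a n.
Proof.
move=> Hs; elim=> [x|x y z k Hxy _ IH]; first exact: walk0.
apply: walk_snoc IH (Hs _ _ Hxy).
Qed.

Lemma walk_map (U : Type) (f : U -> T) (r : U -> U -> Prop) a b n :
  (forall x y, r x y -> e (f x) (f y)) -> gwalk r a b n -> gwalk e (f a) (f b) n.
Proof.
move=> Hf; elim=> [x|x y z k Hxy _ IH]; first exact: walk0.
exact: walkS (Hf _ _ Hxy) IH.
Qed.

End Walks.


Section Dilworth.
Variables (U : finType) (le : rel U).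
Hypothesis le_refl : forall x, le x x.
Hypothesis le_anti : forall x y, le x y -> le y x -> x = y.
Hypothesis le_trans : forall x y z, le x y -> le y z -> le x z.

Definition antib (B : {set U}) : bool := [forall x in B, forall y in B, le x y ==> (x == y)].

Lemma antiP (B : {set U}) : reflect (forall x y, x \in B -> y \in B -> le x y -> x = y) (antib B).
Proof.
apply: (iffP idP).
- move=> /forall_inP H x y Hx Hy Hxy; have /forall_inP H2 := H x Hx.
  by move: (H2 y Hy); rewrite Hxy => /eqP.
- move=> H; apply/forall_inP => x Hx; apply/forall_inP => y Hy; apply/implyP => Hxy.
  by rewrite (H x y Hx Hy Hxy).
Qed.

Lemma maxel (Y : {set U}) y0 : y0 \in Y ->
  exists2 a, a \in Y & forall y, y \in Y -> le a y -> y = a.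
Proof.
move=> Hy0.
case: (@arg_maxnP _ y0 (mem Y) (fun i => #|[set z in Y | le z i]|) Hy0) => a Ha Hmax.
exists a => // y Hy Hay.
case: (boolP (le y a)) => [Hya|Hya]; first exact: le_anti.
have Hsub : [set z in Y | le z a] \proper [set z in Y | le z y].
  apply/properP; split.
  - apply/subsetP => z; rewrite !inE => /andP [-> Hz] /=; exact: le_trans Hz Hay.
  - exists y; by rewrite !inE ?Hy ?le_refl // (negbTE Hya).
have H2 := proper_card Hsub; have H1 := Hmax y Hy; simpl in H1. rewrite leqNgt H2 in H1. done.
Qed.

Lemma colors_surj (B : {set U}) (c : U -> nat) w :
  (forall x, x \in B -> c x < w) -> {in B &, injective c} -> w <= #|B| ->
  forall t, t < w -> exists2 x, x \in B & c x = t.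
Proof.
move=> Hc Hi Hw t Ht.
have Hu : uniq (map c (enum B)).
  rewrite map_inj_in_uniq ?enum_uniq //.
  move=> x y; rewrite !mem_enum; exact: Hi.
have Hs : {subset map c (enum B) <= iota 0 w}.
  move=> u /mapP [x]; rewrite mem_enum => Hx ->; rewrite mem_iota add0n Hc //.
have [_ E] := uniq_min_size Hu Hs ltac:(rewrite size_iota size_map -cardE //).
have : t \in iota 0 w by rewrite mem_iota.
rewrite -E => /mapP [x]; rewrite mem_enum => Hx ->; by exists x.
Qed.

Lemma colors_card (B : {set U}) (c : U -> nat) w :
  (forall t, t < w -> exists2 x, x \in B & c x = t) -> w <= #|B|.
Proof.
move=> H.
have Hs : {subset iota 0 w <= map c (enum B)}.
  move=> t; rewrite mem_iota add0n => Ht; have [x Hx <-] := H t Ht.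
  apply: map_f; by rewrite mem_enum.
have := uniq_leq_size (iota_uniq 0 w) Hs; by rewrite size_iota size_map -cardE.
Qed.

Definition comp x y := le x y || le y x.

Lemma dilworth_gen N : forall (X : {set U}) (w : nat), #|X| <= N ->
  (forall B : {set U}, B \subset X -> antib B -> #|B| <= w) ->
  exists c : U -> nat, (forall x, x \in X -> c x < w) /\
     (forall x y, x \in X -> y \in X -> c x = c y -> comp x y).
Proof.
elim: N => [|N IH] X w HN HB.
  move: HN; rewrite leqn0 => /eqP/cards0_eq ->.
  by exists (fun _ => 0); split => x; rewrite inE.
case: (set_0Vmem X) => [->|[y0 Hy0]].
  by exists (fun _ => 0); split => x; rewrite inE.
have [a Ha Hmax] := maxel Hy0.
have Hw : 1 <= w.
  have := HB [set a]; rewrite cards1; apply; first by rewrite sub1set.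
  apply/antiP => x y; rewrite !inE => /eqP -> /eqP -> //.
pose X' := X :\ a.
have HX' : #|X'| <= N.
  have := cardsD1 a X; rewrite Ha /= -/X' => H; nlia.
have HX'X : X' \subset X by exact: subD1set.
case: (classic (exists B : {set U}, [/\ B \subset X', antib B & w <= #|B|])) => [[B0 [HB0 HaB0 HwB0]]|Hno].
2:{
  have [c' [Hc1 Hc2]] : exists c : U -> nat, (forall x, x \in X' -> c x < w.-1) /\
     (forall x y, x \in X' -> y \in X' -> c x = c y -> comp x y).
    apply: IH => // B HBs HBa.
    case: (leqP w #|B|) => H; last nlia.
    exfalso; apply: Hno; by exists B.
  exists (fun x => if x == a then w.-1 else c' x); split.
  - move=> x Hx; case: eqP => [_|Hxa]; first nlia.
    have : x \in X' by rewrite /X' in_setD1 Hx andbT; apply/eqP.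
    move/Hc1 => H; nlia.
  - move=> x y Hx Hy.
    case: eqP => [->|Hxa]; case: eqP => [->|Hya].
    + by rewrite /comp le_refl.
    + have : y \in X' by rewrite /X' in_setD1 Hy andbT; apply/eqP.
      move/Hc1 => H E; nlia.
    + have : x \in X' by rewrite /X' in_setD1 Hx andbT; apply/eqP.
      move/Hc1 => H E; nlia.
    + apply: Hc2; rewrite /X' in_setD1 ?Hx ?Hy andbT; by apply/eqP.
}
have [c' [Hc1 Hc2]] := IH X' w HX' (fun B HBs => HB B (subset_trans HBs HX'X)).
have Hinj : forall B : {set U}, B \subset X' -> antib B -> {in B &, injective c'}.
  move=> B HBs /antiP HBa x y Hx Hy E.
  have := Hc2 x y (subsetP HBs x Hx) (subsetP HBs y Hy) E; rewrite /comp => /orP [H|H].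
  - exact: HBa.
  - by apply/esym; apply: HBa.
have F1 : forall B : {set U}, B \subset X' -> antib B -> w <= #|B| ->
    forall t, t < w -> exists2 x, x \in B & c' x = t.
  move=> B HBs HBa HwB; apply: colors_surj => //.
  - move=> x Hx; exact: Hc1 (subsetP HBs x Hx).
  - exact: Hinj.
pose M := [set x | [exists B : {set U}, [&& B \subset X', antib B, w <= #|B| & x \in B]]].
have HM : forall x, x \in M -> exists B : {set U}, [/\ B \subset X', antib B, w <= #|B| & x \in B].
  move=> x; rewrite inE => /existsP [B /and4P [H1 H2 H3 H4]]; by exists B.
have HMi : forall x (B : {set U}), B \subset X' -> antib B -> w <= #|B| -> x \in B -> x \in M.
  move=> x B H1 H2 H3 H4; rewrite inE; apply/existsP; exists B; by rewrite H1 H2 H3 H4.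
have HMX : forall x, x \in M -> x \in X'.
  move=> x /HM [B [H1 _ _ H4]]; exact: subsetP H1 x H4.
pose Xt := [set x in M | [forall y in M, (c' y == c' x) ==> le y x]].
have HXt : forall x, x \in Xt -> x \in M /\ forall y, y \in M -> c' y = c' x -> le y x.
  move=> x; rewrite inE => /andP [H1 /forall_inP H2]; split => // y Hy E.
  by have := H2 y Hy; rewrite E eqxx.
have Xt_anti : antib Xt.
  apply/antiP => x y /HXt [Hx Tx] /HXt [Hy Ty] Hxy.
  case: (eqVneq (c' x) (c' y)) => E.
    by apply: le_anti => //; apply: Tx => //; rewrite E.
  have [By [H1 H2 H3 H4]] := HM y Hy.
  have [z Hz Ez] := F1 By H1 H2 H3 (c' x) (Hc1 x (HMX x Hx)).
  have Hzx := Tx z (HMi z By H1 H2 H3 Hz) Ez.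
  have := (elimT (antiP By)) H2 z y Hz H4 (le_trans Hzx Hxy) => Ezy.
  by rewrite -Ezy Ez eqxx in E.
have Xt_col : forall t, t < w -> exists2 x, x \in Xt & c' x = t.
  move=> t Ht.
  have [x0 Hx0 Ex0] := F1 B0 HB0 HaB0 HwB0 t Ht.
  have Hx0Y : x0 \in [set y in M | c' y == t].
    by rewrite inE (HMi x0 B0) // Ex0 eqxx.
  have [xt Hxt Hmx] := maxel Hx0Y.
  move: Hxt; rewrite inE => /andP [HxtM /eqP Ext].
  exists xt => //; rewrite inE HxtM /=; apply/forall_inP => y Hy; apply/implyP => /eqP Ey.
  have := Hc2 y xt (HMX y Hy) (HMX xt HxtM) Ey; rewrite /comp => /orP [//|H].
  have := Hmx y ltac:(by rewrite inE Hy Ey Ext eqxx) H => ->; exact: le_refl.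
have Hcard := colors_card Xt_col.
have [x0 Hx0 Hcx0] : exists2 x0, x0 \in Xt & comp a x0.
  case: (classic (exists2 x0, x0 \in Xt & comp a x0)) => // Hn; exfalso.
  have HaXt : a \notin Xt.
    apply/negP => /HXt [/HMX]; by rewrite !inE eqxx.
  have := HB (a |: Xt).
  rewrite cardsU1 HaXt /=.
  have Hs : a |: Xt \subset X.
    apply/subsetP => x; rewrite in_setU1 => /orP [/eqP ->//|/HXt [/HMX /(subsetP HX'X) //]].
  have Ha' : antib (a |: Xt).
    apply/antiP => x y; rewrite !in_setU1 => /orP [/eqP ->|Hx] /orP [/eqP ->|Hy] Hxy //.
    + apply: False_ind; apply: Hn; exists y => //; by rewrite /comp Hxy.
    + apply: False_ind; apply: Hn; exists x => //; by rewrite /comp Hxy orbT.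
    + exact: (elimT (antiP Xt)) Xt_anti x y Hx Hy Hxy.
  move=> /(_ Hs Ha') H; nlia.
have [Hx0M Tx0] := HXt x0 Hx0.
have Hx0a : le x0 a.
  move: Hcx0; rewrite /comp => /orP [H|//].
  have := Hmax x0 (subsetP HX'X x0 (HMX x0 Hx0M)) H => E.
  by move: (HMX x0 Hx0M); rewrite E !inE eqxx.
pose t0 := c' x0.
pose K := a |: [set y in X' | (c' y == t0) && le y x0].
pose X'' := X :\: K.
have HX'' : #|X''| <= N.
  have := cardsID K X. have : 1 <= #|X :&: K|.
    rewrite card_gt0; apply/set0Pn; exists a; by rewrite !inE Ha eqxx.
  rewrite -/X'' => H1 H2; nlia.
have [c'' [Hd1 Hd2]] : exists c : U -> nat, (forall x, x \in X'' -> c x < w.-1) /\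
     (forall x y, x \in X'' -> y \in X'' -> c x = c y -> comp x y).
  apply: IH => // B HBs HBa.
  case: (leqP w #|B|) => H; last nlia.
  exfalso.
  have HBX' : B \subset X'.
    apply/subsetP => x Hx; have := subsetP HBs x Hx; rewrite !inE => /andP [H1 H2].
    rewrite H2 andbT; apply/negP => /eqP E; by rewrite E eqxx in H1.
  have [z Hz Ez] := F1 B HBX' HBa H t0 (Hc1 x0 (HMX x0 Hx0M)).
  have Hzx0 := Tx0 z (HMi z B HBX' HBa H Hz) Ez.
  have Hz' := subsetP HBX' z Hz. rewrite /X' in_setD1 in Hz'. move/andP: Hz' => [Hza HzX].
  have := subsetP HBs z Hz; by rewrite !inE Hza HzX Ez eqxx Hzx0 orbT.
exists (fun x => if x \in K then w.-1 else c'' x); split.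
- move=> x Hx; case: ifP => HK; first nlia.
  have : x \in X'' by rewrite inE HK Hx.
  move/Hd1 => H; nlia.
- move=> x y Hx Hy.
  have HKc : forall z, z \in K -> z = a \/ (z \in X' /\ c' z = t0 /\ le z x0).
    move=> z; rewrite !inE => /orP [/eqP ->|/andP [H1 /andP [/eqP H2 H3]]]; first by left.
    right; split; [exact: H1| by split].
  case: ifP => HxK; case: ifP => HyK.
  + move=> _.
    case: (HKc x HxK) => [->|[Hx1 [Hx2 Hx3]]]; case: (HKc y HyK) => [->|[Hy1 [Hy2 Hy3]]].
    * by rewrite /comp le_refl.
    * by rewrite /comp (le_trans Hy3 Hx0a) orbT.
    * by rewrite /comp (le_trans Hx3 Hx0a).
    * apply: Hc2 => //; by rewrite Hx2 Hy2.
  + have : y \in X'' by rewrite inE HyK Hy.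
    move/Hd1 => H E; nlia.
  + have : x \in X'' by rewrite inE HxK Hx.
    move/Hd1 => H E; nlia.
  + apply: Hd2; by rewrite inE ?HxK ?HyK.
Qed.

Lemma dilworth w : (forall B : {set U}, antib B -> #|B| <= w) ->
  exists c : U -> 'I_w, forall x y, c x = c y -> comp x y.
Proof.
move=> H.
have [c [Hc1 Hc2]] := @dilworth_gen #|[set: U]| [set: U] w (leqnn _) (fun B _ => H B).
exists (fun x => Ordinal (Hc1 x (in_setT x))) => x y E.
apply: Hc2; rewrite ?in_setT //; by move: E => /(congr1 val).
Qed.

End Dilworth.

Section Grid.
Variable k : nat.

Definition L1 (u v : 'I_k -> int) : nat := \sum_(t < k) absz (u t - v t)%R.

Lemma normE (m : int) (n : nat) : (`|m|%R = Posz n) <-> absz m = n.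
Proof. rewrite -abszE; split => [[->]|->] //. Qed.

Lemma L1_step (u w v : 'I_k -> int) : grid_adj u w -> L1 u v <= L1 w v + 1.
Proof.
move=> [i [Hi Hj]].
have Hi' : absz (u i - w i)%R = 1 by apply/normE.
have H1 : L1 u v <= \sum_(t < k) (absz (u t - w t)%R + absz (w t - v t)%R).
  apply: leq_sum => t _; exact: leqD_dist.
have H2 : \sum_(t < k) absz (u t - w t)%R = 1.
  rewrite (bigD1 i) //= Hi' big1 ?addn0 // => t Ht.
  have Ht' : t != i by move: Ht; rewrite ?andTb.
  by rewrite (Hj t Ht') GRing.subrr.
rewrite big_split /= H2 -/(L1 w v) in H1. nlia.
Qed.

Lemma grid_lb (u v : 'I_k -> int) m : gwalk (@grid_adj k) u v m -> L1 u v <= m.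
Proof.
elim=> [x|x y z n Hxy _ IH].
  by rewrite /L1 big1 // => t _; rewrite GRing.subrr.
have H := L1_step z Hxy; nlia.
Qed.

Definition nz (F : 'I_k -> nat) : 'I_k -> int := fun t => Posz (F t).

Lemma grid_walk N : forall (F G : 'I_k -> nat), L1 (nz F) (nz G) = N ->
  gwalk (@grid_adj k) (nz F) (nz G) N.
Proof.
elim: N => [|N IH] F G HN.
  have E : nz F = nz G.
    apply: functional_extensionality => t; rewrite /nz.
    have : absz ((F t)%:Z - (G t)%:Z)%R = 0.
      apply/eqP; rewrite -leqn0 -HN /L1 (bigD1 t) //=; exact: leq_addr.
    by move/eqP; rewrite distn_eq0 => /eqP ->.
  rewrite E; exact: walk0.
have [t0 Ht0] : exists t0, F t0 <> G t0.
  case: (classic (exists t0, F t0 <> G t0)) => // Hn.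
  exfalso; have : L1 (nz F) (nz G) = 0.
    rewrite /L1 big1 // => t _; rewrite /nz.
    case: (classic (F t = G t)) => [->|H]; first by rewrite GRing.subrr.
    by exfalso; apply: Hn; exists t.
  by rewrite HN.
pose F' := fun t => if t == t0 then (if F t0 < G t0 then (F t0).+1 else (F t0).-1) else F t.
have Hadj : grid_adj (nz F) (nz F').
  exists t0; split.
  - apply/normE; rewrite /nz /F' eqxx; case: ifP => H.
    + by rewrite distnS.
    + have : 0 < F t0 by move/negbT: H; rewrite -leqNgt => H'; nlia.
      case: (F t0) => // n _ /=. by rewrite distnC distnS.
  - move=> j Hj; by rewrite /nz /F' (negbTE Hj).
apply: walkS Hadj (IH _ _ _).
move: HN; rewrite /L1 (bigD1 t0) //= (bigD1 t0 (P := predT)) //=.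
have -> : \sum_(i < k | i != t0) absz (nz F' i - nz G i)%R = \sum_(i < k | i != t0) absz (nz F i - nz G i)%R.
  apply: eq_bigr => i Hi; by rewrite /nz /F' (negbTE Hi).
rewrite /nz /F' eqxx.
move: (\sum_(i < k | i != t0) _) => S.
case: ifP => H.
- rewrite !distnEr //; last exact: ltnW. move=> HN'; nlia.
- move/negbT: H; rewrite -leqNgt => H.
  rewrite -subn1 !distnEl //; try nlia.
Qed.

Lemma grid_dist (F G : 'I_k -> nat) n :
  gdist (@grid_adj k) (nz F) (nz G) n <-> L1 (nz F) (nz G) = n.
Proof.
split.
- move=> [H1 H2]; apply/eqP; rewrite eqn_leq grid_lb //=; apply: H2; exact: grid_walk.
- move=> <-; split; [exact: grid_walk | move=> m; exact: grid_lb].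
Qed.

End Grid.
Section G.
Variables (T : Type) (e : T -> T -> Prop).
Hypothesis Hsym : forall a b, e a b -> e b a.
Hypothesis Hirr : forall a, ~ e a a.
Hypothesis Hcon : connected e.
Hypothesis Hmed : forall u v w, exists! x,
        ginterval e u v x /\ ginterval e v w x /\ ginterval e w u x.

Lemma dex a b : exists n, asb (gwalk e a b n).
Proof. have [n Hn] := Hcon a b; exists n; exact/asbP. Qed.

Definition d a b : nat := ex_minn (dex a b).

Lemma dwalk a b : gwalk e a b (d a b).
Proof. rewrite /d; case: ex_minnP => m /asbP H _; exact H. Qed.

Lemma dmin a b m : gwalk e a b m -> d a b <= m.
Proof. rewrite /d; case: ex_minnP => m0 _ Hm H; apply: Hm; exact/asbP. Qed.

Lemma gdistE a b n : gdist e a b n <-> d a b = n.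
Proof.
split.
- move=> [H1 H2]; apply/eqP; rewrite eqn_leq dmin //=; exact: H2 (dwalk a b).
- move=> <-; split; [exact: dwalk | move=> m; exact: dmin].
Qed.

Lemma d_sym a b : d a b = d b a.
Proof.
apply/eqP; rewrite eqn_leq !dmin //; apply: walk_rev Hsym _; exact: dwalk.
Qed.

Lemma d_tri a b c : d a c <= d a b + d b c.
Proof. apply: dmin; apply: walk_cat; exact: dwalk. Qed.

Lemma d_aa a : d a a = 0.
Proof. apply/eqP; rewrite -leqn0; apply: dmin; exact: walk0. Qed.

Lemma walk0_eq a b : gwalk e a b 0 -> a = b.
Proof. by move=> H; inversion H. Qed.

Lemma d_eq0 a b : d a b = 0 -> a = b.
Proof. move=> H; have := dwalk a b; rewrite H; exact: walk0_eq. Qed.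

Lemma d_adj a b : e a b -> d a b = 1.
Proof.
move=> H; apply/eqP; rewrite eqn_leq dmin /=; last exact: walkS H (walk0 e b).
rewrite lt0n; apply/eqP => /d_eq0 Hab; subst; exact: Hirr H.
Qed.

Lemma d_step a b n : d a b = n.+1 -> exists c, e a c /\ d c b = n.
Proof.
move=> H; have W := dwalk a b; rewrite H in W.
inversion W as [|x c y m Hac Hcb]; subst.
exists c; split => //.
have H1 := dmin Hcb.
have H2 := d_tri a c b. rewrite H (d_adj Hac) in H2. nlia.
Qed.

Lemma d_one a b : d a b = 1 -> e a b.
Proof. move=> /d_step [c [Hac /d_eq0 Hcb]]; by subst. Qed.

Lemma d_lip a x y : e x y -> d a y <= d a x + 1.
Proof. move=> H; rewrite -(d_adj H); exact: d_tri. Qed.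

Definition Iv a b z := d a z + d z b = d a b.

Lemma ginterval_Iv a b z : ginterval e a b z <-> Iv a b z.
Proof.
split.
- move=> [n1 [n2 [/gdistE H1 [/gdistE H2 /gdistE H3]]]]; rewrite /Iv H1 H2 H3 //.
- move=> H; exists (d a z), (d z b); split; [exact/gdistE|split; [exact/gdistE|]].
  apply/gdistE; exact: esym H.
Qed.

Lemma Iv_sym a b z : Iv a b z -> Iv b a z.
Proof. rewrite /Iv => H; rewrite d_sym (d_sym z b) (d_sym a b) in H; nlia. Qed.

Lemma Iv_sub a b c z : Iv a b c -> Iv a c z -> Iv a b z /\ Iv z b c.
Proof.
rewrite /Iv => H1 H2.
have T1 := d_tri a z b. have T2 := d_tri z c b. have T3 := d_tri a c b.
split; nlia.
Qed.

Lemma Iv_sub2 a b c z : Iv a b c -> Iv c b z -> Iv a b z /\ Iv a z c.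
Proof.
move=> H1 H2; have [H3 H4] := Iv_sub (Iv_sym H1) (Iv_sym H2).
split; apply: Iv_sym => //.
Qed.

Lemma Iv_l a b : Iv a b a.
Proof. by rewrite /Iv d_aa. Qed.
Lemma Iv_r a b : Iv a b b.
Proof. by rewrite /Iv d_aa addn0. Qed.

Lemma ex_med u v w : exists x, Iv u v x /\ Iv v w x /\ Iv w u x.
Proof.
have [x [[H1 [H2 H3]] _]] := Hmed u v w.
exists x; split; [exact/ginterval_Iv|split; exact/ginterval_Iv].
Qed.

Definition med u v w : T := proj1_sig (constructive_indefinite_description _ (ex_med u v w)).

Lemma med_spec u v w : Iv u v (med u v w) /\ Iv v w (med u v w) /\ Iv w u (med u v w).
Proof. rewrite /med; case: constructive_indefinite_description => x //. Qed.

Lemma med_uniq u v w x : Iv u v x -> Iv v w x -> Iv w u x -> x = med u v w.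
Proof.
move=> H1 H2 H3; have [y [_ Hy]] := Hmed u v w.
have [M1 [M2 M3]] := med_spec u v w.
have E1 := Hy x; have E2 := Hy (med u v w).
rewrite -E1; [apply: E2|]; (split; [exact/ginterval_Iv|split; exact/ginterval_Iv]).
Qed.

Lemma bip a x y : e x y -> d a x <> d a y.
Proof.
move=> Hxy Heq.
have [M1 [M2 M3]] := med_spec a x y.
have D1 := d_adj Hxy.
move: M1 M2 M3; rewrite /Iv.
set m := med a x y => M1 M2 M3.
case E: (d x m) => [|k].
- move/d_eq0: E => E; rewrite -E (d_sym y x) (d_sym x a) (d_sym y a) in M3. nlia.
- case E2: (d m y) => [|k2].
  + move/d_eq0: E2 => E2; rewrite E2 (d_sym y x) in M1. nlia.
  + nlia.
Qed.

Lemma adj2 a x y : e x y -> d a y = d a x + 1 \/ d a x = d a y + 1.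
Proof.
move=> H; have H1 := @bip a _ _ H; have H2 := @d_lip a _ _ H; have H3 := @d_lip a _ _ (Hsym H). nlia.
Qed.

Lemma d_two a x y w : e w x -> e w y -> x <> y -> d a x = d a y -> d x y = 2.
Proof.
move=> Hx Hy Hne Ha.
have T1 := d_tri x w y. rewrite (d_sym x w) (d_adj Hx) (d_adj Hy) in T1.
case E: (d x y) => [|[|[|k]]].
- by move/d_eq0: E.
- move/d_one: E => E; by have := @bip a _ _ E.
- by [].
- nlia.
Qed.

Lemma QC u w x y n : e w x -> e w y -> x <> y -> d u w = n.+1 -> d u x = n -> d u y = n ->
  exists z, [/\ e z x, e z y & d u z + 1 = n].
Proof.
move=> Hx Hy Hne Hw Hux Huy.
have D2 : d x y = 2 by apply: (@d_two u x y w Hx Hy Hne); rewrite Hux Huy.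
have [M1 [M2 M3]] := med_spec u x y.
move: M1 M2 M3; rewrite /Iv; set z := med u x y => M1 M2 M3.
have Hxz : d x z <> 0.
  move/d_eq0 => E; rewrite -E (d_sym y x) (d_sym x u) (d_sym y u) in M3. nlia.
have Hzy : d z y <> 0.
  move/d_eq0 => E; rewrite E (d_sym y x) in M1. nlia.
exists z; split.
- apply: Hsym; apply: d_one; nlia.
- apply: d_one; nlia.
- rewrite (d_sym z x) in M1. nlia.
Qed.

Definition W (b a z : T) : bool := d z b < d z a.

Lemma Wcases a b z : e a b -> d z a = d z b + 1 \/ d z b = d z a + 1.
Proof. move=> H; case: (adj2 z H); tauto. Qed.

Lemma Wint a b y z : e a b -> W b a y -> Iv b y z -> W b a z.
Proof.
rewrite /W /Iv => Hab Hy Hz.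
have C1 := Wcases y Hab. have T1 := d_tri y z a.
have S1 := d_sym b z. have S2 := d_sym z y. have S3 := d_sym b y.
case: (Wcases z Hab) => H; nlia.
Qed.

Lemma crossing a b z x : e a b -> W a b z -> W b a x -> e z x ->
  [/\ d x b = d z a, d x a = d z a + 1 & d z b = d z a + 1].
Proof.
rewrite /W => Hab Hz Hx Hzx.
have C1 := Wcases z Hab. have C2 := Wcases x Hab.
have A1 := adj2 a Hzx. have A2 := adj2 b Hzx.
rewrite (d_sym a z) (d_sym a x) (d_sym b z) (d_sym b x) in A1 A2.
split; nlia.
Qed.

Lemma Tlem a b z x w : e a b -> W a b z -> W b a x -> W b a w -> e z x -> e z w -> x = w.
Proof.
move=> Hab Hz Hx Hw Hzx Hzw.
case: (classic (x = w)) => // Hne; exfalso.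
have [X1 X2 X3] := crossing Hab Hz Hx Hzx.
have [Y1 Y2 _] := crossing Hab Hz Hw Hzw.
set al := d z a in X1 X2 X3 Y1 Y2.
have [v [Hvx Hvw Hv]] : exists v, [/\ e v x, e v w & d b v + 1 = al].
  apply: (@QC b z x w al Hzx Hzw Hne).
  - by rewrite d_sym X3 addn1.
  - by rewrite d_sym.
  - by rewrite d_sym.
have D2 : d x w = 2.
  by apply: (@d_two b x w z Hzx Hzw Hne); rewrite (d_sym b x) (d_sym b w) X1 Y1.
have Dva : d v a = al.
  have A1 := adj2 a Hvx. have C := Wcases v Hab.
  rewrite (d_sym a v) (d_sym a x) in A1. rewrite (d_sym b v) in Hv. nlia.
have E1 : z = med x w a.
  apply: med_uniq; rewrite /Iv.
  - rewrite (d_sym x z) (d_adj Hzx) (d_adj Hzw) D2 //.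
  - rewrite (d_sym w z) (d_adj Hzw) Y2 -/al; nlia.
  - rewrite (d_sym a z) (d_sym a x) (d_adj Hzx) X2 -/al; nlia.
have E2 : v = med x w a.
  apply: med_uniq; rewrite /Iv.
  - rewrite (d_sym x v) (d_adj Hvx) (d_adj Hvw) D2 //.
  - rewrite (d_sym w v) (d_adj Hvw) Y2 Dva; nlia.
  - rewrite (d_sym a v) (d_sym a x) (d_adj Hvx) X2 Dva; nlia.
have : z = v by rewrite E1 E2.
move=> Ezv; rewrite -Ezv (d_sym b z) X3 in Hv. nlia.
Qed.

Lemma Step a b (Hab : e a b) N : forall x y, d x y <= N -> W b a x -> W b a y ->
  forall x', e x x' -> Iv x y x' -> W b a x'.
Proof.
elim: N => [|N IH] x y HN Hx Hy x' Hxx' Hx'.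
  move: Hx'; rewrite /Iv (d_adj Hxx') => Hx'; nlia.
case: (boolP (W b a x')) => // Hnw; exfalso.
have Hx'a : W a b x'.
  move: Hnw; rewrite /W => Hnw. case: (Wcases x' Hab) => H; nlia.
have [X1 X2 X3] := crossing Hab Hx'a Hx (Hsym Hxx').
set al := d x' a in X1 X2 X3.
set t := d x y in HN.
have Ht : 1 + d x' y = t by move: Hx'; rewrite /Iv (d_adj Hxx').
case Ex'y : (d x' y) => [|t'].
  move/d_eq0: Ex'y => Ex'y; subst x'. move: Hy Hx'a; rewrite /W => Hy Hx'a. nlia.
have [M1 [M2 M3]] := med_spec x' y a.
move: M1 M2 M3; set mu := med x' y a => M1 M2 M3.
case Emu : (d x' mu) => [|k].
-
  move/d_eq0: Emu => Emu. rewrite -Emu in M2.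
  have Hya : d y a = (t - 1) + al.
    move: M2; rewrite /Iv (d_sym y x') Ex'y -/al => M2. nlia.
  have Hyb : d y b + 1 = d y a.
    move: Hy; rewrite /W => Hy. case: (Wcases y Hab) => H; nlia.
  have [N1 [N2 N3]] := med_spec x y b.
  move: N1 N2 N3; set nu := med x y b => N1 N2 N3.
  move: N1 N2 N3; rewrite /Iv -/t => N1 N2 N3.
  rewrite (d_sym b x) X1 -/al in N3.
  have S1 := d_sym nu y. have S2 := d_sym b nu. have S3 := d_sym nu x.
  have Dxn : d x nu = 1 by nlia.
  have Hxn := d_one Dxn.
  have Hne : x' <> nu.
    move=> E; rewrite -E (d_sym x x') (d_adj (Hsym Hxx')) in N1.
    rewrite -E (d_sym b x') X3 in N3. nlia.
  have [w [Hwx' Hwn Hw]] : exists w, [/\ e w x', e w nu & d y w + 1 = t - 1].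
    apply: (@QC y x x' nu (t - 1) Hxx' Hxn Hne).
    - rewrite d_sym -/t; nlia.
    - rewrite d_sym; nlia.
    - rewrite d_sym; nlia.
  have Hww : W b a w.
    rewrite /W.
    have L1 := @d_lip b _ _ (Hsym Hwn). have T1 := d_tri y w a.
    have L2 := @d_lip a _ _ (Hsym Hwx').
    rewrite (d_sym b w) (d_sym b nu) in L1. rewrite (d_sym a w) (d_sym a x') -/al in L2.
    nlia.
  have E := Tlem Hab Hx'a Hx Hww (Hsym Hxx') (Hsym Hwx').
  subst w. rewrite d_sym -/t in Hw. nlia.
-
  have [z2 [Hz2 Dz2]] := d_step Emu.
  have Iz : Iv x' mu z2 by rewrite /Iv (d_adj Hz2) Dz2 Emu.
  have [Iz2y _] := Iv_sub M1 Iz.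
  have [Iz2a _] := Iv_sub (Iv_sym M3) Iz.
  have Wz2 : W a b z2 by apply: (Wint (Hsym Hab) Hx'a); exact: Iv_sym.
  have Dz2a : d z2 a + 1 = al by move: Iz2a; rewrite /Iv (d_adj Hz2) -/al; nlia.
  have Dz2b : d z2 b = al.
    move: Wz2; rewrite /W => Wz2. case: (Wcases z2 Hab) => H; nlia.
  have Hne : x <> z2.
    move=> E; subst z2. nlia.
  have [w [Hwx Hwz2 Hw]] : exists w, [/\ e w x, e w z2 & d b w + 1 = al].
    apply: (@QC b x' x z2 al (Hsym Hxx') Hz2 Hne).
    - rewrite d_sym X3; nlia.
    - rewrite d_sym X1 //.
    - rewrite d_sym Dz2b //.
  have Ww : W b a w.
    apply: (Wint Hab Hx); rewrite /Iv (d_sym w x) (d_adj (Hsym Hwx)) (d_sym b x) X1; nlia.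
  have [Ixz2 Ixz2'] := Iv_sub2 Hx' Iz2y.
  have Dxz2 : d x z2 = 2.
    move: Ixz2'; rewrite /Iv (d_adj Hxx') (d_adj Hz2) //.
  have Dwy : d w y + 1 = t.
    move: Ixz2; rewrite /Iv -/t => Ixz2.
    have T1 := d_tri w z2 y. have T2 := d_tri x w y.
    rewrite (d_adj Hwz2) in T1. rewrite -/t (d_sym x w) (d_adj Hwx) in T2. nlia.
  have Iw : Iv w y z2.
    move: Ixz2; rewrite /Iv -/t (d_adj Hwz2) => Ixz2. nlia.
  have := IH w y _ Ww Hy z2 Hwz2 Iw.
  move: Wz2; rewrite /W => Wz2 H. have H' := H ltac:(nlia). nlia.
Qed.

Lemma Wconv a b : e a b -> forall x y z, W b a x -> W b a y -> Iv x y z -> W b a z.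
Proof.
move=> Hab x y z; move Hn: (d x z) => n; elim: n x Hn => [|n IH] x Hn Hx Hy Hz.
  by move/d_eq0: Hn => <-.
have [x' [Hxx' Hx'z]] := d_step Hn.
have Ix : Iv x z x' by rewrite /Iv (d_adj Hxx') Hx'z Hn add1n.
have [Ixy Ix'] := Iv_sub Hz Ix.
have Wx' := Step Hab (leqnn _) Hx Hy Hxx' Ixy.
exact: IH x' Hx'z Wx' Hy Ix'.
Qed.

Section Interval.
Variables p q : T.

Definition nextv (z : T) : T :=
  match excluded_middle_informative (exists c, e z c /\ d c q + 1 = d z q) with
  | left H => proj1_sig (constructive_indefinite_description _ H)
  | right _ => z end.

Definition g (i : nat) : T := iter i nextv p.
Arguments g i : simpl never.
Definition L := d p q.

Lemma g_spec i : i <= L -> d (g i) q = L - i /\ d p (g i) = i.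
Proof.
elim: i => [|i IH] Hi.
  by rewrite /g /= d_aa subn0.
have [IH1 IH2] := IH (ltnW Hi).
have Hq : d (g i) q = (L - i.+1).+1 by rewrite IH1; nlia.
have Hex : exists c, e (g i) c /\ d c q + 1 = d (g i) q.
  have [c [H1 H2]] := d_step Hq; exists c; split => //; rewrite H2 Hq addn1 //.
have [Hadj Hd] : e (g i) (g i.+1) /\ d (g i.+1) q + 1 = d (g i) q.
  rewrite /g iterS -/(g i) /nextv.
  case: excluded_middle_informative => // H.
  by case: constructive_indefinite_description.
have T1 := d_tri p (g i) (g i.+1). rewrite (d_adj Hadj) in T1.
have T2 := d_tri p (g i.+1) q. rewrite -/L in T2.
split; nlia.
Qed.

Lemma g_adj i : i < L -> e (g i) (g i.+1).
Proof.
move=> Hi; have [IH1 IH2] := g_spec (ltnW Hi).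
have Hq : d (g i) q = (L - i.+1).+1 by rewrite IH1; nlia.
have Hex : exists c, e (g i) c /\ d c q + 1 = d (g i) q.
  have [c [H1 H2]] := d_step Hq; exists c; split => //; rewrite H2 Hq addn1 //.
rewrite /g iterS -/(g i) /nextv.
case: excluded_middle_informative => // H.
by case: constructive_indefinite_description => c [].
Qed.

Lemma g0 : g 0 = p. Proof. by []. Qed.
Lemma gL : g L = q.
Proof. have [H _] := g_spec (leqnn L); rewrite subnn in H; exact: d_eq0. Qed.

Lemma g_dist i j : i <= j -> j <= L -> d (g i) (g j) = j - i.
Proof.
move=> Hij HjL.
have Hle : d (g i) (g j) <= j - i.
  elim: j Hij HjL => [|j IH] Hij HjL.
    by rewrite leqn0 in Hij; move/eqP: Hij => ->; rewrite d_aa.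
  case: (ltngtP i j.+1) Hij => // H _.
  - have := IH H (ltnW HjL) => H1.
    have T1 := d_tri (g i) (g j) (g j.+1). rewrite (d_adj (g_adj HjL)) in T1. nlia.
  - by rewrite H d_aa.
have [_ H1] := g_spec HjL. have [_ H2] := g_spec (leq_trans Hij HjL).
have T1 := d_tri p (g i) (g j). nlia.
Qed.

Definition inI x := Iv p q x.

Lemma inI_g i : i <= L -> inI (g i).
Proof. move=> H; have [H1 H2] := g_spec H; rewrite /inI /Iv H1 H2 -/L; nlia. Qed.

Definition lab (x : T) : {set 'I_L} := [set i : 'I_L | W (g i.+1) (g i) x].

Lemma lab_card x : inI x -> #|lab x| = d p x.
Proof.
move=> Hx.
have Hs : forall j, j <= L ->
  d x (g j) + 2 * (\sum_(0 <= i < j) (W (g i.+1) (g i) x : nat)) = d x p + j.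
  elim=> [|j IH] Hj; first by rewrite big_geq // muln0 addn0 addn0.
  rewrite big_nat_recr //=.
  have := IH (ltnW Hj) => IH'.
  have A := adj2 x (g_adj Hj).
  move: IH'; rewrite /W.
  case: (d x (g j.+1) < d x (g j)) / boolP => H /= IH'; nlia.
have := Hs L (leqnn L); rewrite gL => H.
have Hc : #|lab x| = \sum_(0 <= i < L) (W (g i.+1) (g i) x : nat).
  rewrite -sum1_card big_mkcond /= big_mkord /=.
  apply: eq_bigr => i _; rewrite /lab inE; by case: (W _ _ _).
rewrite Hc; move: Hx; rewrite /inI /Iv -/L d_sym => Hx; nlia.
Qed.

Lemma q_W (i : 'I_L) : W (g i.+1) (g i) q.
Proof.
have Hi := ltn_ord i.
rewrite /W (d_sym q) (d_sym q (g i)).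
have [H1 _] := g_spec Hi. have [H2 _] := g_spec (ltnW Hi). nlia.
Qed.

Lemma lab_mono x z : inI x -> inI z -> Iv p z x -> lab x \subset lab z.
Proof.
move=> Hx Hz Hzx; apply/subsetP => i; rewrite !inE => Hi.
have [_ H] := Iv_sub Hz Hzx.
exact: Wconv (g_adj (ltn_ord i)) x q z Hi (q_W i) H.
Qed.

Definition mt x y := med p x y.

Lemma mt_spec x y : inI x -> inI (mt x y) /\ Iv p x (mt x y) /\ Iv p y (mt x y).
Proof.
move=> Hx; have [M1 [M2 M3]] := med_spec p x y.
split; last by split => //; exact: Iv_sym.
have [H _] := Iv_sub Hx M1; exact: H.
Qed.

Lemma mt_dist x y : d x y + 2 * d p (mt x y) = d p x + d p y.
Proof.
have [M1 [M2 M3]] := med_spec p x y.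
move: M1 M2 M3; rewrite /Iv -/(mt x y) => M1 M2 M3.
have S1 := d_sym (mt x y) p. have S2 := d_sym y (mt x y). have S3 := d_sym y p. have S4 := d_sym (mt x y) x. nlia.
Qed.

Lemma lab_mt x y : inI x -> inI y -> lab (mt x y) = lab x :&: lab y.
Proof.
move=> Hx Hy; have [Hm [H1 H2]] := mt_spec y Hx.
have [_ [_ H2']] := mt_spec x Hy.
apply/eqP; rewrite eqEsubset; apply/andP; split.
  by rewrite subsetI !lab_mono.
apply/subsetP => i; rewrite !inE => /andP [Wx Wy].
have [M1 _] := med_spec p x y.
have [_ [M2 _]] := med_spec p x y.
exact: Wconv (g_adj (ltn_ord i)) x y _ Wx Wy M2.
Qed.

Lemma lab_dist x y : inI x -> inI y ->
  d x y + 2 * #|lab x :&: lab y| = #|lab x| + #|lab y|.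
Proof.
move=> Hx Hy; rewrite -lab_mt // !lab_card //; first exact: mt_dist.
by have [H _] := mt_spec y Hx.
Qed.

Lemma lab_inj x y : inI x -> inI y -> lab x = lab y -> x = y.
Proof.
move=> Hx Hy E; have := lab_dist Hx Hy; rewrite E setIid => H.
apply: d_eq0; nlia.
Qed.

Definition jn x y := med x y q.

Lemma jn_spec x y : inI x -> inI (jn x y) /\ Iv p (jn x y) x.
Proof.
move=> Hx; have [M1 [M2 M3]] := med_spec x y q.
exact: Iv_sub2 Hx (Iv_sym M3).
Qed.

Lemma lab_jn x y : inI x -> inI y -> lab (jn x y) = lab x :|: lab y.
Proof.
move=> Hx Hy.
have [Hj Hjx] := jn_spec y Hx.
have Ejn : jn x y = jn y x.
  rewrite /jn; apply: med_uniq; have [M1 [M2 M3]] := med_spec x y q; by [apply: Iv_sym | ].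
have [_ Hjy] := jn_spec x Hy. rewrite -Ejn in Hjy.
apply/eqP; rewrite eq_sym eqEcard; apply/andP; split.
  by rewrite subUset !lab_mono.
have [M1 _] := med_spec x y q.
move: M1 Hjx Hjy; rewrite /Iv -/(jn x y) => M1 Hjx Hjy.
have D := lab_dist Hx Hy. have U := cardsUI (lab x) (lab y).
rewrite lab_card // lab_card // in D. rewrite lab_card //.
have S1 := d_sym (jn x y) x. have S2 := d_sym y (jn x y).
rewrite lab_card // lab_card // in U. nlia.
Qed.

Definition ple (i j : 'I_L) : bool :=
  asb (forall x, inI x -> j \in lab x -> i \in lab x).

Lemma pleP i j : reflect (forall x, inI x -> j \in lab x -> i \in lab x) (ple i j).
Proof. exact: asbP. Qed.

Lemma le_refl i : ple i i.
Proof. by apply/pleP. Qed.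

Lemma le_trans i j k : ple i j -> ple j k -> ple i k.
Proof. move=> /pleP H1 /pleP H2; apply/pleP => x Hx Hk; exact: H1 x Hx (H2 x Hx Hk). Qed.

Lemma lab_g (m : nat) (i : 'I_L) : m <= L -> (i \in lab (g m)) = (i < m).
Proof.
move=> Hm; rewrite inE /W (d_sym (g m)) (d_sym (g m) (g i)).
have Hi := ltn_ord i.
case: (leqP m i) => H.
- rewrite (d_sym (g i.+1)) (d_sym (g i)) !g_dist //; try nlia.
- rewrite !g_dist //; try nlia.
Qed.

Lemma le_anti i j : ple i j -> ple j i -> i = j.
Proof.
move=> /pleP H1 /pleP H2.
case: (ltngtP i j) => H; last exact: val_inj.
- have Hm : i.+1 <= L := ltn_ord i.
  have := H2 _ (inI_g Hm); rewrite !lab_g // ltnSn => /(_ isT) H0; nlia.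
- have Hm : j.+1 <= L := ltn_ord j.
  have := H1 _ (inI_g Hm); rewrite !lab_g // ltnSn => /(_ isT) H0; nlia.
Qed.

Lemma lab_down x i j : inI x -> ple i j -> j \in lab x -> i \in lab x.
Proof. move=> Hx /pleP H; exact: H x Hx. Qed.

Lemma prin i : exists x, inI x /\ lab x = [set j | ple j i].
Proof.
have Hex : exists r, asb (exists x, inI x /\ i \in lab x /\ d p x = r).
  exists (d p q); apply/asbP; exists q; split; first exact: Iv_r.
  by rewrite inE q_W.
case: (ex_minnP Hex) => r /asbP [x0 [Hx0 [Hi Hr]]] Hmin.
have Hsub : forall y, inI y -> i \in lab y -> lab x0 \subset lab y.
  move=> y Hy Hiy.
  have [Hm [H1 H2]] := mt_spec y Hx0.
  have Hmi : i \in lab (mt x0 y) by rewrite lab_mt // inE Hi Hiy.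
  have := Hmin (d p (mt x0 y)) ltac:(apply/asbP; exists (mt x0 y); split => //).
  move: H1; rewrite /Iv => H1 H3.
  have E : mt x0 y = x0 by apply: d_eq0; nlia.
  by rewrite -E lab_mt // subsetIr.
exists x0; split => //; apply/setP => j.
apply/idP/idP => H.
- rewrite inE; apply/pleP => y Hy Hiy; exact: (subsetP (Hsub y Hy Hiy)).
- rewrite inE in H; exact: lab_down H Hi.
Qed.

Definition downclosed (D : {set 'I_L}) := forall i j, ple i j -> j \in D -> i \in D.

Lemma real_seq s : exists x, inI x /\ forall j, (j \in lab x) = has (ple j) s.
Proof.
elim: s => [|i s [x [Hx IH]]].
  exists p; split; first exact: Iv_l.
  have : lab p = set0 by apply: cards0_eq; rewrite lab_card ?d_aa //; exact: Iv_l.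
  by move=> -> j; rewrite inE.
have [u [Hu Hlu]] := prin i.
exists (jn u x); split; first by have [H _] := jn_spec x Hu.
move=> j; rewrite lab_jn // inE Hlu inE IH //.
Qed.

Lemma realize D : downclosed D -> exists x, inI x /\ lab x = D.
Proof.
move=> HD; have [x [Hx Hl]] := real_seq (enum D).
exists x; split => //; apply/setP => j; rewrite Hl.
apply/hasP/idP.
- by move=> [i]; rewrite mem_enum => Hi Hji; exact: HD Hji Hi.
- by move=> Hj; exists j; rewrite ?mem_enum ?le_refl.
Qed.


Lemma memF m (D0 : {set 'I_L}) (a : 'I_m -> 'I_L) (S : {set 'I_m}) i :
  injective a -> a i \notin D0 -> (a i \in D0 :|: a @: S) = (i \in S).
Proof. move=> Ha Hi; rewrite inE (negbTE Hi) /= mem_imset //. Qed.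

Lemma notF m (D0 : {set 'I_L}) (a : 'I_m -> 'I_L) (S : {set 'I_m}) j :
  ~~ [exists i, a i == j] -> (j \in D0 :|: a @: S) = (j \in D0).
Proof.
move=> /existsPn H; rewrite inE; case: (j \in D0) => //=.
apply/negbTE/imsetP => [[i _ Ei]]; have := H i; by rewrite Ei eqxx.
Qed.

Lemma cube_lemma m (D0 : {set 'I_L}) (a : 'I_m -> 'I_L) :
  injective a -> (forall i, a i \notin D0) ->
  (forall S : {set 'I_m}, downclosed (D0 :|: a @: S)) ->
  exists f : {ffun 'I_m -> bool} -> T,
   cube_in e (ginterval e p q) f /\ forall x, inI (f x) /\ lab (f x) = D0 :|: a @: [set i | x i].
Proof.
move=> Ha HD0 HD.
have Hf : forall x : {ffun 'I_m -> bool}, exists z, inI z /\ lab z = D0 :|: a @: [set i | x i].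
  move=> x; exact: realize (HD _).
pose f := fun x => proj1_sig (constructive_indefinite_description _ (Hf x)).
have Hfs : forall x, inI (f x) /\ lab (f x) = D0 :|: a @: [set i | x i].
  move=> x; rewrite /f; by case: constructive_indefinite_description.
have Hd : forall x y, d (f x) (f y) = #|[set i | x i != y i]|.
  move=> x y; have [Hx Ex] := Hfs x; have [Hy Ey] := Hfs y.
  have D := lab_dist Hx Hy.
  have C1 := cardsID (lab (f y)) (lab (f x)).
  have C2 := cardsID (lab (f x)) (lab (f y)).
  rewrite setIC in C2.
  have E1 : forall (u v : {ffun 'I_m -> bool}),
      (D0 :|: a @: [set i | u i]) :\: (D0 :|: a @: [set i | v i]) =
      a @: ([set i | u i] :\: [set i | v i]).
    move=> u v; apply/setP => j.
    case: (boolP [exists i, a i == j]) => [/existsP [i /eqP <-]|Hn].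
    - by rewrite in_setD !memF // mem_imset // !inE.
    - rewrite in_setD !notF // andNb; apply/esym/negbTE/imsetP => [[i _ Ei]].
      by move/existsPn: Hn => /(_ i); rewrite Ei eqxx.
  rewrite Ex Ey !E1 !card_imset // in C1 C2.
  rewrite -Ex -Ey in C1 C2.
  have E2 : [set i | x i != y i] = ([set i | x i] :\: [set i | y i]) :|: ([set i | y i] :\: [set i | x i]).
    by apply/setP => i; rewrite !inE; case: (x i); case: (y i).
  have E3 : ([set i | x i] :\: [set i | y i]) :&: ([set i | y i] :\: [set i | x i]) = set0.
    by apply/setP => i; rewrite !inE; case: (x i); case: (y i).
  rewrite E2 cardsU E3 cards0 subn0. nlia.
exists f; split; last exact: Hfs.
split.
- move=> x y Exy; have := Hd x y; rewrite Exy d_aa => /esym/cards0_eq H.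
  apply/ffunP => i; apply/eqP; apply: negbNE; apply/negP => Hi.
  have : i \in [set i | x i != y i] by rewrite inE.
  by rewrite H inE.
- move=> x y Hxy; apply: d_one; rewrite Hd; exact: Hxy.
- move=> x; apply/ginterval_Iv; by case: (Hfs x).
Qed.

Lemma part1 (m : nat) (y : 'I_m -> T) : injective y ->
  (forall i, e p (y i) /\ ginterval e p q (y i)) ->
  exists f : ({ffun 'I_m -> bool} -> T),
    [/\ cube_in e (ginterval e p q) f, (exists x, f x = p) & forall i, exists x, f x = y i].
Proof.
move=> Hy Hyi.
have HI : forall i, inI (y i) by move=> i; apply/ginterval_Iv; case: (Hyi i).
have Hex : forall i, exists j, lab (y i) = [set j].
  move=> i; apply/cards1P; rewrite lab_card // d_adj //; by case: (Hyi i).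
pose a := fun i => proj1_sig (constructive_indefinite_description _ (Hex i)).
have Ea : forall i, lab (y i) = [set a i].
  move=> i; rewrite /a; by case: constructive_indefinite_description.
have Ha : injective a.
  move=> i j E; apply: Hy; apply: lab_inj => //; by rewrite !Ea E.
have [f [Hc Hf]] : exists f : {ffun 'I_m -> bool} -> T,
   cube_in e (ginterval e p q) f /\ forall x, inI (f x) /\ lab (f x) = set0 :|: a @: [set i | x i].
  apply: cube_lemma => //; first by move=> i; rewrite inE.
  move=> S j' j Hle; rewrite set0U => /imsetP [i Hi Ej]; subst j.
  have : j' \in lab (y i) by apply: lab_down Hle _; rewrite ?Ea ?inE //.
  rewrite Ea inE => /eqP ->; exact: imset_f.
exists f; split => //.
- exists [ffun => false]; apply: lab_inj; [by case: (Hf [ffun => false])| exact: Iv_l|].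
  have [_ ->] := Hf [ffun => false].
  have -> : [set i | [ffun=> false] i] = set0 :> {set 'I_m} by apply/setP => i; rewrite !inE ffunE.
  rewrite imset0 setU0; apply/esym/cards0_eq; rewrite lab_card ?d_aa //; exact: Iv_l.
- move=> i; exists [ffun j => j == i]; apply: lab_inj; [by case: (Hf [ffun j => j == i])| exact: HI|].
  have [_ ->] := Hf [ffun j => j == i].
  have -> : [set j | [ffun j => j == i] j] = [set i] by apply/setP => j; rewrite !inE ffunE.
  by rewrite imset_set1 set0U Ea.
Qed.

Lemma anti_cube (B : {set 'I_L}) :
  (forall i j, i \in B -> j \in B -> ple i j -> i = j) ->
  exists f : {ffun 'I_#|B| -> bool} -> T, cube_in e (ginterval e p q) f.
Proof.
move=> HB.
pose a := fun i : 'I_#|B| => (enum_val i : 'I_L).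
have Ha : injective a by move=> i j; exact: enum_val_inj.
have HaB : forall i, a i \in B by move=> i; exact: enum_valP.
have HBa : forall j, j \in B -> exists i, a i = j.
  move=> j Hj; exists (enum_rank_in Hj j); rewrite /a enum_rankK_in //.
pose D0 := [set j | [exists i, ple j (a i)] && (j \notin B)].
have [f [Hf _]] : exists f : {ffun 'I_#|B| -> bool} -> T,
   cube_in e (ginterval e p q) f /\ forall x, inI (f x) /\ lab (f x) = D0 :|: a @: [set i | x i].
  apply: cube_lemma => //.
    by move=> i; rewrite inE HaB andbF.
  move=> S j' j Hle; rewrite inE => /orP [|/imsetP [i Hi Ej]].
  - rewrite inE => /andP [/existsP [i Hji] HjB].
    have Hj'i := le_trans Hle Hji.
    case: (boolP (j' \in B)) => Hj'B.
    + have E := HB _ _ Hj'B (HaB i) Hj'i. subst j'.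
      have := le_anti Hji Hle => E; subst j. by rewrite HaB in HjB.
    + rewrite inE; apply/orP; left; rewrite inE Hj'B andbT; apply/existsP; by exists i.
  - subst j. rewrite inE; case: (boolP (j' \in B)) => Hj'B.
    + have E := HB _ _ Hj'B (HaB i) Hle. subst j'. apply/orP; right; exact: imset_f.
    + apply/orP; left; rewrite inE Hj'B andbT; apply/existsP; by exists i.
by exists f.
Qed.


Lemma ind_walk N : forall (a b : {z | ginterval e p q z}), d (sval a) (sval b) = N ->
  (forall z, Iv (sval a) (sval b) z -> ginterval e p q z) ->
  gwalk (@ginduced T e (ginterval e p q)) a b N.
Proof.
elim: N => [|N IH] [x Hx] [y Hy] /= HN HI.
  move/d_eq0: HN => E; subst y. rewrite (proof_irrelevance _ Hx Hy). exact: walk0.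
have [c [Hxc Hcy]] := d_step HN.
have Ic : Iv x y c by rewrite /Iv (d_adj Hxc) Hcy HN add1n.
have Hc := HI c Ic.
apply: (@walkS _ _ _ (exist _ c Hc)); first exact: Hxc.
apply: IH => //= z Hz. apply: HI. by have [H _] := Iv_sub2 Ic Hz.
Qed.

Lemma ind_dist (a b : {z | ginterval e p q z}) n :
  gdist (@ginduced T e (ginterval e p q)) a b n <-> d (sval a) (sval b) = n.
Proof.
have Hlb : forall m, gwalk (@ginduced T e (ginterval e p q)) a b m -> d (sval a) (sval b) <= m.
  move=> m H; apply: dmin; exact: walk_map H.
have Hw : gwalk (@ginduced T e (ginterval e p q)) a b (d (sval a) (sval b)).
  case: a b {Hlb} => [x Hx] [y Hy] /=.
  have Hx' : inI x by apply/ginterval_Iv. have Hy' : inI y by apply/ginterval_Iv.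
  have [Hm [Hmx Hmy]] := mt_spec y Hx'.
  have Hm' : ginterval e p q (mt x y) by apply/ginterval_Iv.
  have [_ [M2 _]] := med_spec p x y.
  move: M2; rewrite /Iv -/(mt x y) => M2.
  have W1 : gwalk (@ginduced T e (ginterval e p q)) (exist _ x Hx) (exist _ (mt x y) Hm') (d x (mt x y)).
    apply: ind_walk => //= z Hz. apply/ginterval_Iv.
    have [H1 _] := Iv_sub2 Hmx (Iv_sym Hz).
    by have [H2 _] := Iv_sub Hx' H1.
  have W2 : gwalk (@ginduced T e (ginterval e p q)) (exist _ (mt x y) Hm') (exist _ y Hy) (d (mt x y) y).
    apply: ind_walk => //= z Hz. apply/ginterval_Iv.
    have [H1 _] := Iv_sub2 Hmy Hz.
    by have [H2 _] := Iv_sub Hy' H1.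
  have := walk_cat W1 W2; by rewrite M2.
split.
- move=> [H1 H2]; apply/eqP; rewrite eqn_leq Hlb //=; exact: H2 _ Hw.
- move=> <-; split => // m; exact: Hlb.
Qed.

Lemma part2 (k : nat) :
  (forall (m : nat) (f : {ffun 'I_m -> bool} -> T), cube_in e (ginterval e p q) f -> m <= k) ->
  exists g : ({z : T | ginterval e p q z} -> ('I_k -> int)),
     forall a b n, gdist (@ginduced T e (ginterval e p q)) a b n <-> gdist (@grid_adj k) (g a) (g b) n.
Proof.
move=> Hk.
have Hw : forall B : {set 'I_L}, antib ple B -> #|B| <= k.
  move=> B /antiP HB; have [f Hf] := anti_cube HB; exact: Hk _ f Hf.
have [c Hc] := dilworth le_refl le_anti le_trans Hw.
pose C := fun t : 'I_k => [set i | c i == t].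
pose F := fun (z : {z | ginterval e p q z}) (t : 'I_k) => #|lab (sval z) :&: C t|.
exists (fun z => nz (F z)) => a b n.
rewrite ind_dist grid_dist.
suff -> : L1 (nz (F a)) (nz (F b)) = d (sval a) (sval b) by [].
have Ha : inI (sval a) by apply/ginterval_Iv; exact: (proj2_sig a).
have Hb : inI (sval b) by apply/ginterval_Iv; exact: (proj2_sig b).
have Hpart : forall X : {set 'I_L}, \sum_(t < k) #|X :&: C t| = #|X|.
  move=> X; rewrite -sum1_card (partition_big c predT) //=.
  apply: eq_bigr => t _; rewrite -sum1_card; apply: eq_bigl => i; by rewrite !inE.
set A := lab (sval a). set B := lab (sval b).
have Hnest : forall t, (A :&: C t) \subset (B :&: C t) \/ (B :&: C t) \subset (A :&: C t).
  move=> t; case: (boolP (A :&: C t \subset B :&: C t)) => [H|/subsetPn [i Hi Hni]]; first by left.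
  right; apply/subsetP => j Hj.
  move: Hi Hni Hj; rewrite !inE => /andP [HiA /eqP Hit] Hni /andP [HjB /eqP Hjt].
  rewrite Hjt eqxx andbT.
  have : comp ple i j by apply: Hc; rewrite Hit Hjt.
  case/orP => H.
  - have HjB' : j \in lab (sval b) by rewrite inE.
    have := lab_down Hb H HjB'; rewrite inE => Hib.
    by rewrite Hib Hit eqxx in Hni.
  - have HiA' : i \in lab (sval a) by rewrite inE.
    have := lab_down Ha H HiA'; by rewrite inE.
have Ht : forall t, absz (nz (F a) t - nz (F b) t)%R + #|(A :&: B) :&: C t| + #|(A :&: B) :&: C t| = #|A :&: C t| + #|B :&: C t|.
  move=> t; rewrite /nz /F -/A -/B.
  have E : (A :&: B) :&: C t = (A :&: C t) :&: (B :&: C t) by rewrite setIACA setIid.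
  rewrite E. case: (Hnest t) => H.
  - rewrite (setIidPl H) distnEr ?subset_leq_card //. have := subset_leq_card H => H'. nlia.
  - rewrite [(A :&: C t) :&: _]setIC (setIidPl H) distnEl ?subset_leq_card //. have := subset_leq_card H => H'. nlia.
have := lab_dist Ha Hb; rewrite -/A -/B => D.
have S : \sum_(t < k) (absz (nz (F a) t - nz (F b) t)%R + #|(A :&: B) :&: C t| + #|(A :&: B) :&: C t|) =
         \sum_(t < k) (#|A :&: C t| + #|B :&: C t|) by apply: eq_bigr => t _; exact: Ht t.
rewrite !big_split /= !Hpart -/(L1 _ _) in S.
nlia.
Qed.

End Interval.

End G.

Theorem mainTheorem6 (T : Type) (e : T -> T -> Prop) (p q : T) (k : nat) :
  median_graph e ->
  (exists f : ({ffun 'I_k -> bool} -> T), cube_in e (ginterval e p q) f) ->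
  (forall (m : nat) (f : {ffun 'I_m -> bool} -> T),
      cube_in e (ginterval e p q) f -> m <= k) ->
  (forall v, ginterval e p q v ->
     forall (m : nat) (y : 'I_m -> T), injective y ->
       (forall i, e v (y i) /\ ginterval e v q (y i)) ->
       exists f : ({ffun 'I_m -> bool} -> T),
         [/\ cube_in e (ginterval e v q) f,
             (exists x, f x = v) &
             forall i, exists x, f x = y i])
  /\
  (exists g : ({z : T | ginterval e p q z} -> ('I_k -> int)),
     forall a b n,
       gdist (@ginduced T e (ginterval e p q)) a b n <-> gdist (@grid_adj k) (g a) (g b) n).
Proof.
move=> [[Hsym Hirr] Hcon Hmed] _ Hk; split.
- move=> v _ m y Hy Hyi; exact: (part1 Hsym Hirr Hcon Hmed Hy Hyi).
- exact: (part2 Hsym Hirr Hcon Hmed Hk).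
Qed.
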